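(* Let $F$ be a posheaf on a locale $X$. The following are equivalent: (1) $F$ is complete. (2) For every downsheaf $S$ of $F$, $\bigvee S$ exists and extends to a global point $p\in F(1_X)$ (i.e. $p|_{\mathrm{dom}(\bigvee S)}=\bigvee S$) such that for each $u\in\mathcal{O}(X)$, $p|_u$ is the least element $z$ of $F(u)$ satisfying $S^u\subseteq\downarrow z$. (3) For every subsheaf $S$ of $F$, $\bigvee S$ exists and extends to a global point $p\in F(1_X)$ such that for each $u\in\mathcal{O}(X)$, $p|_u$ is the least element $z$ of $F(u)$ satisfying $S^u\subseteq\downarrow z$. (4) Every $F(u)$ is a complete lattice, and for all $v\le u$ the restriction map $F(u)\to F(v)$ is surjective and has both a left adjoint and a right adjoint.
   Context: Let $X$ be a locale with frame of opens $\mathcal{O}(X)$ and top element $1_X$. A posheaf on $X$ is a sheaf of sets $F$ with (POS1) each $F(u)$ a poset; (POS2) restriction maps $F(u)\to F(v)$, $x\mapsto x|_v$ ($v\le u$), order-preserving; (POS3) if $u=\bigvee_i u_i$ and $s,t\in F(u)$ satisfy $s|_{u_i}\le t|_{u_i}$ for all $i$, then $s\le t$. A point of $F$ is a morphism $p:\hat1\to F$ with $\hat1$ a subsheaf of the terminal sheaf; $\mathrm{dom}(p)$ is the largest open $u$ with $\hat1(u)\neq\emptyset$; a point is identified with an element of $F(\mathrm{dom}(p))$; a global point is one with domain $1_X$. Points are ordered by $p_1\le p_2$ iff $\mathrm{dom}(p_1)\le\mathrm{dom}(p_2)$ and $p_1\le p_2|_{\mathrm{dom}(p_1)}$. For a subsheaf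 $A$ of $F$, a point $x$ is an upper bound of $A$ if $y\le x$ for all points $y$ of $A$, and $\bigvee A$ is the least upper bound. For $u\in\mathcal{O}(X)$, $F^u$ is the restriction of $F$ to $\downarrow u$ (regarded also as a subsheaf of $F$), and for a subsheaf $S$, $S^u$ is its restriction to $\downarrow u$. A downsheaf of $F$ is a subsheaf $G$ with each $G(v)$ a down-set of $F(v)$. For $z\in F(u)$, $\downarrow z$ is the downsheaf of $F^u$ with $(\downarrow z)(v)=\{y\in F(v)\mid y\le z|_v\}$ for $v\le u$. $\mathbb{D}F$ is the sheaf with $\mathbb{D}F(u)$ = the set of downsheaves of $F^u$, restriction $S\mapsto S^v$, ordered by inclusion, and $\downarrow:F\to\mathbb{D}F$, $z\mapsto\downarrow z$ is the principal ideal embedding. For order-preserving morphisms of posheaves $\alpha:F\to G$, $\beta:G\to F$, $\alpha\dashv\beta$ means $\alpha x\le y\iff x\le\beta y$ for all points $x$ of $F$, $y$ of $G$. $F$ is complete if the principal ideal embedding $\downarrow:F\to\mathbb{D}F$ has a left adjoint. *)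

(* Defs.v *)
Set Implicit Arguments.
Unset Strict Implicit.

Record Frame := {
  opens :> Type;
  ole : opens -> opens -> Prop;
  ole_refl : forall a, ole a a;
  ole_trans : forall a b c, ole a b -> ole b c -> ole a c;
  ole_antisym : forall a b, ole a b -> ole b a -> a = b;
  osup : (opens -> Prop) -> opens;
  osup_ub : forall (C : opens -> Prop) v, C v -> ole v (osup C);
  osup_least : forall (C : opens -> Prop) w,
      (forall v, C v -> ole v w) -> ole (osup C) w;
  omeet : opens -> opens -> opens;
  omeet_l : forall a b, ole (omeet a b) a;
  omeet_r : forall a b, ole (omeet a b) b;
  omeet_glb : forall a b c, ole c a -> ole c b -> ole c (omeet a b);
  otop : opens;
  otop_max : forall a, ole a otop;
  odistr : forall a (C : opens -> Prop),
      ole (omeet a (osup C)) (osup (fun w => exists v, C v /\ w = omeet a v))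
}.

Arguments ole {X} : rename.
Arguments osup {X} : rename.
Arguments omeet {X} : rename.
Arguments otop X : rename.

(* A cover of u is a family C of opens below u with u <= \/ C. *)
Record Sheaf (X : Frame) := {
  sec :> X -> Type;
  res : forall u v : X, ole v u -> sec u -> sec v;
  res_id : forall u (h : ole u u) x, res h x = x;
  res_comp : forall u v w (h1 : ole v u) (h2 : ole w v) (h3 : ole w u) x,
      res h2 (res h1 x) = res h3 x;
  sh_local : forall (u : X) (C : X -> Prop) (hC : forall v, C v -> ole v u),
      ole u (osup C) ->
      forall x y : sec u,
        (forall v (hv : C v), res (hC v hv) x = res (hC v hv) y) -> x = y;
  sh_glue : forall (u : X) (C : X -> Prop) (hC : forall v, C v -> ole v u),
      ole u (osup C) ->
      forall s : forall v, C v -> sec v,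
        (forall v w (hv : C v) (hw : C w),
            res (omeet_l v w) (s v hv) = res (omeet_r v w) (s w hw)) ->
        exists x : sec u, forall v (hv : C v), res (hC v hv) x = s v hv
}.

Arguments res {X} s {u v} h x : rename.

Record Posheaf (X : Frame) := {
  psh :> Sheaf X;
  ple : forall u, psh u -> psh u -> Prop;
  ple_refl : forall u (x : psh u), ple x x;
  ple_trans : forall u (x y z : psh u), ple x y -> ple y z -> ple x z;
  ple_antisym : forall u (x y : psh u), ple x y -> ple y x -> x = y;
  res_mono : forall u v (h : ole v u) (x y : psh u),
      ple x y -> ple (res psh h x) (res psh h y);
  pos3 : forall (u : X) (C : X -> Prop) (hC : forall v, C v -> ole v u),
      ole u (osup C) ->
      forall s t : psh u,
        (forall v (hv : C v), ple (res psh (hC v hv) s) (res psh (hC v hv) t)) ->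
        ple s t
}.

Arguments ple {X} F u x y : rename.

Section Defs.
Variable X : Frame.

Definition subfam (F : Sheaf X) := forall u : X, F u -> Prop.

Definition is_subsheaf (F : Sheaf X) (A : subfam F) : Prop :=
  (forall (u v : X) (h : ole v u) x, A u x -> A v (res F h x)) /\
  (forall (u : X) (C : X -> Prop) (hC : forall v, C v -> ole v u),
      ole u (osup C) ->
      forall x : F u, (forall v (hv : C v), A v (res F (hC v hv) x)) -> A u x).

Definition incl (F : Sheaf X) (A B : subfam F) : Prop :=
  forall v y, A v y -> B v y.

(* S^u : restriction of S to the opens below u (as a subsheaf of F). *)
Definition res_sub (F : Sheaf X) (S : subfam F) (u : X) : subfam F :=
  fun v y => S v y /\ ole v u.

Definition is_downsheaf (F : Posheaf X) (G : subfam F) : Prop :=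
  is_subsheaf G /\ (forall v x y, ple F v x y -> G v y -> G v x).

(* Downsheaf of F^u, regarded as a subsheaf of F (supported below u). *)
Definition is_downsheaf_in (F : Posheaf X) (u : X) (G : subfam F) : Prop :=
  is_downsheaf G /\ (forall v y, G v y -> ole v u).
Arguments is_downsheaf_in : clear implicits.

Definition dn (F : Posheaf X) (u : X) (z : F u) : subfam F :=
  fun v y => exists h : ole v u, ple F v y (res F h z).

Definition point (F : Sheaf X) := {u : X & F u}.
Definition dom (F : Sheaf X) (p : point F) : X := projT1 p.

Definition pt_le (F : Posheaf X) (p q : point F) : Prop :=
  exists h : ole (projT1 p) (projT1 q),
    ple F (projT1 p) (projT2 p) (res F h (projT2 q)).

Definition pt_in (F : Sheaf X) (A : subfam F) (p : point F) : Prop :=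
  A (projT1 p) (projT2 p).

Definition is_ub (F : Posheaf X) (A : subfam F) (p : point F) : Prop :=
  forall y, pt_in A y -> pt_le y p.

Definition is_lub (F : Posheaf X) (A : subfam F) (p : point F) : Prop :=
  is_ub A p /\ forall q, is_ub A q -> pt_le p q.

Definition is_least_bound (F : Posheaf X) (S : subfam F) (u : X) (z : F u) : Prop :=
  incl (res_sub S u) (dn z) /\
  forall z' : F u, incl (res_sub S u) (dn z') -> ple F u z z'.
Arguments is_least_bound {F} S u z.

Definition sup_extends (F : Posheaf X) (S : subfam F) : Prop :=
  exists b : point F, is_lub S b /\
    exists p : F (otop X),
      res F (otop_max (projT1 b)) p = projT2 b /\
      forall u : X, is_least_bound S u (res F (otop_max u) p).

Definition DF (F : Posheaf X) (u : X) := {G : subfam F | is_downsheaf_in F u G}.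

Lemma res_sub_downsheaf_in (F : Posheaf X) (u v : X) (h : ole v u) (G : subfam F) :
  is_downsheaf_in F u G -> is_downsheaf_in F v (res_sub G v).
Proof.
  intros [[[Hr Hl] Hd] Hs]. split; [split; [split|]|].
  - intros a b hab x [Hx Ha]. split; [apply Hr; exact Hx | exact (ole_trans hab Ha)].
  - intros w C hC Hcov x Hx. split.
    + apply (Hl w C hC Hcov x). intros c hc. exact (proj1 (Hx c hc)).
    + apply (ole_trans Hcov). apply osup_least. intros c hc. exact (proj2 (Hx c hc)).
  - intros a x y Hxy [Hy Ha]. split; [exact (Hd a x y Hxy Hy) | exact Ha].
  - intros a y [_ Ha]. exact Ha.
Qed.

Definition DFres (F : Posheaf X) (u v : X) (h : ole v u) (S : DF F u) : DF F v :=
  exist _ (res_sub (proj1_sig S) v) (res_sub_downsheaf_in h (proj2_sig S)).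

Lemma dn_downsheaf_in (F : Posheaf X) (u : X) (z : F u) :
  is_downsheaf_in F u (dn z).
Proof.
  split; [split; [split|]|].
  - intros a b hba x [ha Hx].
    exists (ole_trans hba ha).
    rewrite <- (res_comp ha hba (ole_trans hba ha) z).
    apply res_mono. exact Hx.
  - intros w C hC Hcov x Hx.
    assert (hw : ole w u).
    { apply (ole_trans Hcov). apply osup_least. intros c hc.
      destruct (Hx c hc) as [hcu _]. exact hcu. }
    exists hw. apply (@pos3 X F w C hC Hcov). intros c hc.
    destruct (Hx c hc) as [hcu Hc].
    rewrite (res_comp hw (hC c hc) hcu z). exact Hc.
  - intros a x y Hxy [ha Hy]. exists ha. exact (ple_trans Hxy Hy).
  - intros a y [ha _]. exact ha.
Qed.

Definition DFdn (F : Posheaf X) (u : X) (z : F u) : DF F u :=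
  exist _ (dn z) (dn_downsheaf_in z).

Definition DFpoint (F : Posheaf X) := {u : X & DF F u}.

Definition DFpt_le (F : Posheaf X) (p q : DFpoint F) : Prop :=
  exists h : ole (projT1 p) (projT1 q),
    incl (proj1_sig (projT2 p)) (proj1_sig (DFres h (projT2 q))).

(* F is complete: the principal ideal embedding has a left adjoint, i.e. an
   order-preserving sheaf morphism L : DF -> F with
   L S <= y  <->  S <= down y   for all points S of DF and y of F. *)
Definition complete (F : Posheaf X) : Prop :=
  exists L : forall u : X, DF F u -> F u,
    (forall (u v : X) (h : ole v u) (S : DF F u),
        L v (DFres h S) = res F h (L u S)) /\
    (forall (u : X) (S T : DF F u),
        incl (proj1_sig S) (proj1_sig T) -> ple F u (L u S) (L u T)) /\
    (forall (S : DFpoint F) (y : point F),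
        pt_le (existT _ (projT1 S) (L (projT1 S) (projT2 S))) y <->
        DFpt_le S (existT _ (projT1 y) (DFdn (projT2 y)))).

Definition is_complete_lattice (F : Posheaf X) (u : X) : Prop :=
  forall A : F u -> Prop, exists s : F u,
    (forall x, A x -> ple F u x s) /\
    (forall t, (forall x, A x -> ple F u x t) -> ple F u s t).

Definition res_adjoints (F : Posheaf X) : Prop :=
  forall (u v : X) (h : ole v u),
    (forall y : F v, exists x : F u, res F h x = y) /\
    (exists l : F v -> F u, forall (y : F v) (x : F u),
        ple F u (l y) x <-> ple F v y (res F h x)) /\
    (exists r : F v -> F u, forall (x : F u) (y : F v),
        ple F v (res F h x) y <-> ple F u x (r y)).

End Defs.

(* Main.v *)
Require Import Defs.
From Stdlib Require Import ClassicalEpsilon.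

Lemma res_pi {X : Frame} (F : Sheaf X) {u v : X} (h h' : ole v u) (x : F u) :
  res F h x = res F h' x.
Proof.
  rewrite <- (res_comp h (ole_refl v) h' x). rewrite res_id. reflexivity.
Qed.

Lemma res_refl {X : Frame} (F : Sheaf X) {u : X} (h : ole u u) (x : F u) :
  res F h x = x.
Proof. apply res_id. Qed.

Lemma res_res {X : Frame} (F : Sheaf X) {u v w} (h1 : ole v u) (h2 : ole w v) (h3 : ole w u) x :
  res F h2 (res F h1 x) = res F h3 x.
Proof. apply res_comp. Qed.

Lemma ple_eq {X : Frame} {F : Posheaf X} {u} {x y : F u} : x = y -> ple F u x y.
Proof. intros ->; apply ple_refl. Qed.

Lemma lb_unique {X : Frame} {F : Posheaf X} {S : subfam F} {u} {z z' : F u} :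
  is_least_bound S z -> is_least_bound S z' -> z = z'.
Proof.
  intros [H1 H2] [H1' H2']. apply ple_antisym; auto.
Qed.

Lemma lb_ext {X : Frame} {F : Posheaf X} {A B : subfam F} {u} {z : F u} :
  (forall z' : F u, incl (res_sub A u) (dn z') <-> incl (res_sub B u) (dn z')) ->
  is_least_bound A z -> is_least_bound B z.
Proof.
  intros H [H1 H2]. split.
  - apply H; exact H1.
  - intros z' Hz. apply H2. apply H. exact Hz.
Qed.

Definition LB {X : Frame} (F : Posheaf X) : Prop :=
  (forall u (S : DF F u), exists z : F u, is_least_bound (proj1_sig S) z) /\
  (forall u v (h : ole v u) (S : DF F u) (z : F u),
      is_least_bound (proj1_sig S) z -> is_least_bound (proj1_sig S) (res F h z)).

Lemma res_sub_idem {X : Frame} (F : Posheaf X) (S : subfam F) v w (z : F w) :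
  incl (res_sub (res_sub S v) v) (dn z) <-> incl (res_sub S v) (dn z).
Proof.
  split; intros H a y Hy.
  - apply H. destruct Hy as [Hy Hw]. split; [split|]; assumption.
  - apply H. destruct Hy as [[Hy _] Hw]. split; assumption.
Qed.

Lemma res_sub_in {X : Frame} (F : Posheaf X) u (S : subfam F) w (z : F w) :
  is_downsheaf_in u S ->
  (incl (res_sub S u) (dn z) <-> incl S (dn z)).
Proof.
  intros [_ Hs]. split; intros H a y Hy.
  - apply H. split; [exact Hy | exact (Hs _ _ Hy)].
  - apply H. exact (proj1 Hy).
Qed.

Lemma lb_bound {X : Frame} {F : Posheaf X} {S : subfam F} {u} {z : F u} {v} {y : F v} (h : ole v u) :
  is_least_bound S z -> S v y -> ple F v y (res F h z).
Proof.
  intros [H1 _] Hy. destruct (H1 v y (conj Hy h)) as [h' Hle].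
  rewrite (res_pi F h h'). exact Hle.
Qed.

Lemma complete_LB {X : Frame} (F : Posheaf X) : complete F -> LB F.
Proof.
  intros [L [Hnat [Hmono Hadj]]].
  assert (Hlb : forall u (S : DF F u), is_least_bound (proj1_sig S) (L u S)).
  { intros u S. split.
    - destruct (proj1 (Hadj (existT _ u S) (existT _ u (L u S)))) as [h Hi].
      + exists (ole_refl u). simpl. rewrite res_id. apply ple_refl.
      + simpl in *. intros v y [Hy Hv]. destruct (Hi v y Hy) as [Hd _]. exact Hd.
    - intros z' Hz. destruct (proj2 (Hadj (existT _ u S) (existT _ u z'))) as [h Hle].
      + exists (ole_refl u). simpl. intros v y Hy. split.
        * apply Hz. split; [exact Hy | exact (proj2 (proj2_sig S) v y Hy)].
        * exact (proj2 (proj2_sig S) v y Hy).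
      + simpl in Hle. rewrite res_id in Hle. exact Hle. }
  split.
  - intros u S. exists (L u S). apply Hlb.
  - intros u v h S z Hz. rewrite (lb_unique Hz (Hlb u S)).
    rewrite <- Hnat. apply (lb_ext (A := proj1_sig (DFres h S))).
    + intro z'. simpl. apply res_sub_idem.
    + apply Hlb.
Qed.
Lemma LB_complete {X : Frame} (F : Posheaf X) : LB F -> complete F.
Proof.
  intros [H1 H2].
  pose (L := fun u (S : DF F u) => proj1_sig (constructive_indefinite_description _ (H1 u S))).
  assert (HL : forall u S, is_least_bound (proj1_sig S) (L u S)).
  { intros u S. exact (proj2_sig (constructive_indefinite_description _ (H1 u S))). }
  exists L. split; [|split].
  - intros u v h S. apply (lb_unique (HL v (DFres h S))).
    apply (lb_ext (A := proj1_sig S)).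
    + intro z'. simpl. symmetry. apply res_sub_idem.
    + apply H2. apply HL.
  - intros u S T Hi. apply (proj2 (HL u S)). intros v y [Hy Hv].
    apply (proj1 (HL u T)). split; auto.
  - intros [u S] [w y]. cbn. split.
    + intros [h Hle]. exists h. intros v y' Hy'.
      assert (Hv : ole v u) by exact (proj2 (proj2_sig S) v y' Hy').
      split; [|exact Hv].
      exists (ole_trans Hv h).
      eapply ple_trans. apply (lb_bound Hv (HL u S) Hy').
      rewrite <- (res_res F h Hv (ole_trans Hv h)). apply res_mono. exact Hle.
    + intros [h Hi]. exists h. apply (proj2 (HL u S)). intros v y' [Hy' Hv].
      destruct (Hi v y' Hy') as [[hv Hle] _]. exists Hv.
      rewrite (res_res F h Hv hv). exact Hle.
Qed.

Lemma osup_mono {X : Frame} (A B : X -> Prop) :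
  (forall c, A c -> B c) -> ole (osup A) (osup B).
Proof.
  intros H. apply osup_least. intros c Hc. apply osup_ub. auto.
Qed.

Definition rclosed {X : Frame} {F : Posheaf X} (T : subfam F) : Prop :=
  forall u v (h : ole v u) x, T u x -> T v (res F h x).

Definition good {X : Frame} {F : Posheaf X} (T : subfam F) {v : X} (y : F v) : X -> Prop :=
  fun c => exists hc : ole c v, exists t, T c t /\ ple F c (res F hc y) t.

Definition gen {X : Frame} {F : Posheaf X} (T : subfam F) (u : X) : subfam F :=
  fun v y => ole v u /\ ole v (osup (good T y)).

Lemma gen_in {X : Frame} {F : Posheaf X} (T : subfam F) (u : X) :
  rclosed T -> is_downsheaf_in u (gen T u).
Proof.
  intros HT. split; [split; [split|]|].
  - intros a b hab x [Hau Hcov]. split; [exact (ole_trans hab Hau)|].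
    eapply ole_trans. apply (omeet_glb (ole_refl b) (ole_trans hab Hcov)).
    eapply ole_trans. apply odistr.
    apply osup_least. intros w [c [[hc [t [Ht Hle]]] ->]].
    apply osup_ub. exists (omeet_l b c). exists (res F (omeet_r b c) t). split.
    + apply HT. exact Ht.
    + rewrite (res_res F hab (omeet_l b c) (ole_trans (omeet_r b c) hc)).
      rewrite <- (res_res F hc (omeet_r b c) (ole_trans (omeet_r b c) hc)).
      apply res_mono. exact Hle.
  - intros w C hC Hcov x Hx. split.
    + apply (ole_trans Hcov). apply osup_least. intros c hc. exact (proj1 (Hx c hc)).
    + apply (ole_trans Hcov). apply osup_least. intros c hc.
      apply (ole_trans (proj2 (Hx c hc))). apply osup_mono.
      intros e [he [t [Ht Hle]]]. exists (ole_trans he (hC c hc)). exists t. split; [exact Ht|].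
      rewrite (res_res F (hC c hc) he (ole_trans he (hC c hc))) in Hle. exact Hle.
  - intros a x y Hxy [Hu Hc]. split; [exact Hu|].
    apply (ole_trans Hc). apply osup_mono. intros e [he [t [Ht Hle]]].
    exists he. exists t. split; [exact Ht|]. eapply ple_trans; [|exact Hle].
    apply res_mono. exact Hxy.
  - intros v y [Hv _]. exact Hv.
Qed.

Lemma gen_bound {X : Frame} {F : Posheaf X} (T : subfam F) (u w : X) (z : F w) :
  ole w u ->
  (incl (res_sub (gen T u) w) (dn z) <-> incl (res_sub T w) (dn z)).
Proof.
  intros hwu. split.
  - intros H v y [Hy Hv]. apply H. split; [|exact Hv]. split.
    + exact (ole_trans Hv hwu).
    + apply osup_ub. exists (ole_refl v). exists y. split; [exact Hy|].
      rewrite res_id. apply ple_refl.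
  - intros H v y [[Hvu Hcov] Hv]. exists Hv.
    apply (@pos3 X F v (good T y)
             (fun c hc => match hc with ex_intro _ h _ => h end) Hcov).
    intros c hc. destruct hc as [hc [t [Ht Hle]]]. cbn.
    eapply ple_trans. exact Hle.
    destruct (H c t (conj Ht (ole_trans hc Hv))) as [h' Hle'].
    rewrite (res_res F Hv hc h'). exact Hle'.
Qed.

Lemma LB_gen {X : Frame} {F : Posheaf X} (T : subfam F) :
  LB F -> rclosed T -> forall u, exists s : F u,
    forall v (h : ole v u), is_least_bound T (res F h s).
Proof.
  intros [H1 H2] HT u.
  destruct (H1 u (exist _ (gen T u) (gen_in T u HT))) as [s Hs].
  exists s. intros v h. apply (lb_ext (A := gen T u)).
  - intros z'. apply gen_bound. exact h.
  - apply (H2 u v h (exist _ (gen T u) (gen_in T u HT))). exact Hs.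
Qed.

Lemma LB_sup {X : Frame} {F : Posheaf X} :
  LB F -> forall S : subfam F, rclosed S -> sup_extends S.
Proof.
  intros HLB S HS. destruct (LB_gen S HLB HS (otop X)) as [p Hp].
  pose (d := osup (fun v => exists y : F v, S v y)).
  exists (existT _ d (res F (otop_max d) p)). split.
  - split.
    + intros [v y] Hy. unfold pt_in in Hy; cbn in Hy.
      assert (hvd : ole v d) by (apply osup_ub; exists y; exact Hy).
      exists hvd. cbn.
      pose proof (lb_bound (ole_refl v) (Hp v (otop_max v)) Hy) as Hb.
      rewrite res_id in Hb.
      rewrite (res_res F (otop_max d) hvd (otop_max v)). exact Hb.
    + intros [w q] Hq. cbn.
      assert (hdw : ole d w).
      { apply osup_least. intros v [y Hy].
        destruct (Hq (existT _ v y) Hy) as [h _]. exact h. }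
      exists hdw. apply (proj2 (Hp d (otop_max d))). intros v y [Hy Hv].
      destruct (Hq (existT _ v y) Hy) as [hvw Hle]. cbn in *.
      exists Hv. rewrite (res_res F hdw Hv hvw). exact Hle.
  - exists p. split; [reflexivity|]. intros u. apply Hp.
Qed.

Lemma sup_LB {X : Frame} {F : Posheaf X} :
  (forall S : subfam F, is_downsheaf S -> sup_extends S) -> LB F.
Proof.
  intros H. split.
  - intros u S. destruct (H _ (proj1 (proj2_sig S))) as [b [_ [p [_ Hp]]]].
    exists (res F (otop_max u) p). apply Hp.
  - intros u v h S z Hz. destruct (H _ (proj1 (proj2_sig S))) as [b [_ [p [_ Hp]]]].
    rewrite (lb_unique Hz (Hp u)). rewrite (res_res F (otop_max u) h (otop_max v)).
    apply Hp.
Qed.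

Definition TA {X : Frame} {F : Posheaf X} {u : X} (A : F u -> Prop) : subfam F :=
  fun w t => exists a (h : ole w u), A a /\ t = res F h a.

Lemma TA_rclosed {X : Frame} {F : Posheaf X} {u : X} (A : F u -> Prop) : rclosed (TA A).
Proof.
  intros a b hba x [c [h [Hc ->]]]. exists c. exists (ole_trans hba h). split; [exact Hc|].
  apply res_res.
Qed.

Lemma LB_join {X : Frame} {F : Posheaf X} : LB F -> forall u (A : F u -> Prop),
  exists s : F u,
    (forall v (h : ole v u), is_least_bound (TA A) (res F h s)) /\
    (forall x, A x -> ple F u x s) /\
    (forall t, (forall x, A x -> ple F u x t) -> ple F u s t).
Proof.
  intros HLB u A. destruct (LB_gen (TA A) HLB (TA_rclosed A) u) as [s Hs].
  exists s. split; [exact Hs|].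
  pose proof (Hs u (ole_refl u)) as Hu. rewrite res_id in Hu. split.
  - intros x Hx. pose proof (lb_bound (ole_refl u) Hu (ex_intro _ x (ex_intro _ (ole_refl u) (conj Hx (eq_sym (res_id _ x)))))) as Hb.
    rewrite !res_id in Hb. exact Hb.
  - intros t Ht. apply (proj2 Hu). intros w t' [[a [h [Ha ->]]] Hw].
    exists Hw. rewrite (res_pi F h Hw). apply res_mono. apply Ht. exact Ha.
Qed.

Lemma dn_rclosed {X : Frame} {F : Posheaf X} {v : X} (y : F v) : rclosed (dn y).
Proof. exact (proj1 (proj1 (proj1 (dn_downsheaf_in y)))). Qed.

Lemma lb_dn {X : Frame} {F : Posheaf X} {v : X} (y : F v) : is_least_bound (dn y) y.
Proof.
  split.
  - intros w t [Ht _]. exact Ht.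
  - intros z' Hz. destruct (Hz v y (conj (ex_intro _ (ole_refl v) (ple_eq (eq_sym (res_id _ y)))) (ole_refl v))) as [h' Hle].
    rewrite res_id in Hle. exact Hle.
Qed.

Lemma LB_4 {X : Frame} {F : Posheaf X} :
  LB F -> (forall u : X, is_complete_lattice F u) /\ res_adjoints F.
Proof.
  intros HLB. split.
  - intros u A. destruct (LB_join HLB u A) as [s [_ [H1 H2]]]. exists s. split; assumption.
  - intros u v h. split; [|split].
    + intros y. destruct (LB_gen (dn y) HLB (dn_rclosed y) u) as [s Hs].
      exists s. exact (lb_unique (Hs v h) (lb_dn y)).
    + exists (fun y => proj1_sig (constructive_indefinite_description _
                          (LB_gen (dn y) HLB (dn_rclosed y) u))).
      intros y x.
      destruct (constructive_indefinite_description _ (LB_gen (dn y) HLB (dn_rclosed y) u)) as [s Hs].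
      cbn. pose proof (Hs u (ole_refl u)) as Hu. rewrite res_id in Hu. split.
      * intros Hle. eapply ple_trans.
        -- pose proof (lb_bound h Hu (ex_intro _ (ole_refl v) (ple_eq (eq_sym (res_id _ y))))) as Hb. exact Hb.
        -- apply res_mono. exact Hle.
      * intros Hle. apply (proj2 Hu). intros w y' [[hw Hle'] Hwu]. exists Hwu.
        eapply ple_trans. exact Hle'.
        rewrite <- (res_res F h hw Hwu). apply res_mono. exact Hle.
    + exists (fun y => proj1_sig (constructive_indefinite_description _
                          (LB_join HLB u (fun x => ple F v (res F h x) y)))).
      intros x y.
      destruct (constructive_indefinite_description _ (LB_join HLB u (fun x => ple F v (res F h x) y))) as [s [Hs [H1 H2]]].
      cbn. split.
      * intros Hle. apply H1. exact Hle.
      * intros Hle. eapply ple_trans. apply res_mono. exact Hle.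
        apply (proj2 (Hs v h)). intros w t [[a [ha [Ha ->]]] Hw]. exists Hw.
        rewrite <- (res_res F h Hw ha). apply res_mono. exact Ha.
Qed.

Lemma side_v {X : Frame} (w v c : X) : c = w \/ c = v -> ~ ole c w -> ole c v.
Proof.
  intros [-> | ->] n.
  - exfalso. apply n. apply ole_refl.
  - apply ole_refl.
Qed.

Lemma BC {X : Frame} {F : Posheaf X} (H : res_adjoints F) (u v w : X)
  (hv : ole v u) (hw : ole w u) (y : F w) (z : F v) (r : F v -> F u)
  (Hr : forall (x : F u) (y : F v), ple F v (res F hv x) y <-> ple F u x (r y)) :
  ple F _ (res F (omeet_l w v) y) (res F (omeet_r w v) z) ->
  ple F w y (res F hw (r z)).
Proof.
  intros Hyz.
  destruct (H v (omeet w v) (omeet_r w v)) as [Hsurj [[l Hl] _]].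
  pose (z'' := l (res F (omeet_l w v) y)).
  assert (Hz1 : ple F v z'' z) by (apply Hl; exact Hyz).
  assert (Hz2 : res F (omeet_r w v) z'' = res F (omeet_l w v) y).
  { apply ple_antisym.
    - destruct (Hsurj (res F (omeet_l w v) y)) as [b Hb].
      rewrite <- Hb. apply res_mono. apply Hl. rewrite Hb. apply ple_refl.
    - apply Hl. apply ple_refl. }
  assert (key : forall e (he1 : ole e w) (he2 : ole e v), res F he1 y = res F he2 z'').
  { intros e he1 he2. pose proof (omeet_glb he1 he2) as he.
    rewrite <- (res_res F (omeet_l w v) he he1).
    rewrite <- (res_res F (omeet_r w v) he he2). rewrite Hz2. reflexivity. }
  pose (C := fun c => c = w \/ c = v).
  pose (s := fun c (hc : C c) =>
    match excluded_middle_informative (ole c w) with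
    | left h => res F h y
    | right n => res F (side_v w v c hc n) z''
    end).
  assert (P : forall c hc e (he : ole e c),
     (forall he1 : ole e w, res F he (s c hc) = res F he1 y) /\
     (forall he2 : ole e v, res F he (s c hc) = res F he2 z'')).
  { intros c hc e he. unfold s.
    destruct (excluded_middle_informative (ole c w)) as [h | n]; split.
    - intros he1. apply res_res.
    - intros he2. rewrite (res_res F h he (ole_trans he h)). apply key.
    - intros he1. rewrite (res_res F _ he (ole_trans he (side_v w v c hc n))).
      symmetry. apply key.
    - intros he2. apply res_res. }
  assert (hC : forall c, C c -> ole c (osup C)) by (intros c hc; apply osup_ub; exact hc).
  destruct (sh_glue (u := osup C) hC (ole_refl _) (s := s)) as [g Hg].
  { intros c c' hc hc'.
    assert (hcc : ole c w \/ ole c v).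
    { destruct hc as [-> | ->]; [left | right]; apply ole_refl. }
    destruct hcc as [hcw | hcv].
    - pose proof (ole_trans (omeet_l c c') hcw) as he1.
      rewrite (proj1 (P c hc _ (omeet_l c c')) he1).
      rewrite (proj1 (P c' hc' _ (omeet_r c c')) he1). reflexivity.
    - pose proof (ole_trans (omeet_l c c') hcv) as he2.
      rewrite (proj2 (P c hc _ (omeet_l c c')) he2).
      rewrite (proj2 (P c' hc' _ (omeet_r c c')) he2). reflexivity. }
  assert (hgu : ole (osup C) u).
  { apply osup_least. intros c [-> | ->]; assumption. }
  destruct (proj1 (H u (osup C) hgu) g) as [x Hx].
  assert (hwC : C w) by (left; reflexivity).
  assert (hvC : C v) by (right; reflexivity).
  assert (Ew : res F hw x = y).
  { rewrite <- (res_res F hgu (hC w hwC) hw). rewrite Hx, Hg.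
    rewrite <- (res_id (ole_refl w) (s w hwC)).
    rewrite (proj1 (P w hwC w (ole_refl w)) (ole_refl w)). apply res_id. }
  assert (Ev : res F hv x = z'').
  { rewrite <- (res_res F hgu (hC v hvC) hv). rewrite Hx, Hg.
    rewrite <- (res_id (ole_refl v) (s v hvC)).
    rewrite (proj2 (P v hvC v (ole_refl v)) (ole_refl v)). apply res_id. }
  rewrite <- Ew. apply res_mono. apply Hr. rewrite Ev. exact Hz1.
Qed.

Lemma four_LB {X : Frame} {F : Posheaf X} :
  (forall u : X, is_complete_lattice F u) /\ res_adjoints F -> LB F.
Proof.
  intros [HL H]. split.
  - intros u S.
    destruct (HL u (fun x => exists v (h : ole v u) y, proj1_sig S v y /\
                 (forall x', ple F u x x' <-> ple F v y (res F h x')))) as [s [Hs1 Hs2]].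
    exists s. split.
    + intros v y [Hy Hv]. exists Hv.
      destruct (H u v Hv) as [_ [[l Hl] _]].
      apply Hl. apply Hs1. exists v, Hv, y. split; [exact Hy|]. apply Hl.
    + intros z' Hz'. apply Hs2. intros x [v [h [y [Hy Hx]]]].
      apply Hx. destruct (Hz' v y (conj Hy h)) as [h' Hle].
      rewrite (res_pi F h h'). exact Hle.
  - intros u v h S z Hz. split.
    + intros w y [Hy Hw]. exists Hw.
      rewrite (res_res F h Hw (ole_trans Hw h)).
      exact (lb_bound (ole_trans Hw h) Hz Hy).
    + intros z' Hz'. destruct (H u v h) as [_ [_ [r Hr]]].
      assert (Hzr : ple F u z (r z')).
      { apply (proj2 Hz). intros w y [Hy Hw]. exists Hw.
        apply (BC H u v w h Hw y z' r Hr).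
        assert (HS : proj1_sig S (omeet w v) (res F (omeet_l w v) y)).
        { exact (proj1 (proj1 (proj1 (proj2_sig S))) w (omeet w v) (omeet_l w v) y Hy). }
        destruct (Hz' _ _ (conj HS (omeet_r w v))) as [h' Hle].
        rewrite (res_pi F (omeet_r w v) h'). exact Hle. }
      eapply ple_trans. apply res_mono. exact Hzr.
      apply Hr. apply ple_refl.
Qed.

Theorem proposition3p2 (X : Frame) (F : Posheaf X) :
  (complete F <-> (forall S : subfam F, is_downsheaf S -> sup_extends S)) /\
  (complete F <-> (forall S : subfam F, is_subsheaf S -> sup_extends S)) /\
  (complete F <-> ((forall u : X, is_complete_lattice F u) /\ res_adjoints F)).
Proof.
  split; [|split]; split.
  - intros Hc S HS. apply (LB_sup (complete_LB F Hc)). exact (proj1 (proj1 HS)).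
  - intros H. apply LB_complete. apply sup_LB. exact H.
  - intros Hc S HS. apply (LB_sup (complete_LB F Hc)). exact (proj1 HS).
  - intros H. apply LB_complete. apply sup_LB. intros S HS. apply H. exact (proj1 HS).
  - intros Hc. apply LB_4. apply complete_LB. exact Hc.
  - intros H. apply LB_complete. apply four_LB. exact H.
Qed.
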